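(* Let $q$ be a prime power, $8\le n\le q$, $\alpha_1,\dots,\alpha_n\in\mathbb{F}_q$ distinct, $u_1,\dots,u_n\in\mathbb{F}_q^*$, and $H\in\mathbb{F}_q^{7\times n}$ with $H_{ab}=u_b\alpha_b^{a-1}$ (so $\ker H$ has distance $8$). Then the number of $e\in\mathbb{F}_q^n$ with $|e|=4$ for which there exists $e'\in\mathbb{F}_q^n$, $e'\ne e$, $|e'|\le 4$, $He'=He$, is at most $$\frac{(n-4)(n-5)(n-6)(n-7)}{24(q-1)^3}\cdot(q-1)^4\binom{n}{4}.$$
   Context: $|e|$ denotes the Hamming weight of $e\in\mathbb{F}_q^n$. *)

(* Defs.v *)
From HB Require Import structures.
From mathcomp Require Import all_boot all_order all_algebra all_field.
Set Implicit Arguments. Unset Strict Implicit. Unset Printing Implicit Defensive.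
Import Order.TTheory GRing.Theory Num.Theory.
Local Open Scope ring_scope.

Definition hwt (F : finFieldType) (n : nat) (e : 'cV[F]_n) : nat :=
  #|[set i : 'I_n | e i ord0 != 0]|.

(* Parity-check matrix of a generalized Reed-Solomon code with 7 rows:
   H_{ab} = u_b alpha_b^(a-1), with rows indexed from 0 (so a-1 = row index). *)
Definition grsH (F : finFieldType) (n : nat) (alpha u : 'I_n -> F) : 'M[F]_(7, n) :=
  \matrix_(a < 7, b < n) (u b * alpha b ^+ a).

(* Main.v *)
Require Import Defs.
From HB Require Import structures.
From mathcomp Require Import all_boot all_order all_algebra all_field.
From mathcomp Require Import ring lra zify.
Import Order.TTheory GRing.Theory Num.Theory.
Local Open Scope ring_scope.

Section Aux.
Local Set Implicit Arguments.
Variables (F : finFieldType) (n : nat) (alpha u : 'I_n -> F).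
Hypothesis Halpha : injective alpha.
Hypothesis Hu : forall i, u i != 0.

Definition supp (e : 'cV[F]_n) : {set 'I_n} := [set i | e i ord0 != 0].

Lemma key_poly (c : 'cV[F]_n) : grsH alpha u *m c = 0 ->
  forall p : {poly F}, (size p <= 7)%N ->
  \sum_b u b * c b ord0 * p.[alpha b] = 0.
Proof.
move=> Hc p Hp.
under eq_bigr => b _ do rewrite (horner_coef_wide _ Hp) big_distrr.
rewrite exchange_big /=; apply: big1 => i _.
have := congr1 (fun M : 'M[F]_(7,1) => M i ord0) Hc; rewrite mxE [RHS]mxE => Hi.
rewrite (eq_bigr (fun b => p`_i * (grsH alpha u i b * c b ord0))).
  by rewrite -big_distrr /= Hi mulr0.
by move=> b _; rewrite mxE; ring.
Qed.

Lemma dist7 (c : 'cV[F]_n) : grsH alpha u *m c = 0 ->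
  (#|supp c| <= 7)%N -> c = 0.
Proof.
move=> Hc Hs; apply/matrixP => j k; rewrite (ord1 k) mxE.
apply/eqP; apply/negPn/negP => cj.
have jS : j \in supp c by rewrite inE.
pose s := [seq alpha b | b <- enum (supp c :\ j)].
pose p := \prod_(x <- s) ('X - x%:P).
have sp : (size p <= 7)%N.
  rewrite size_prod_XsubC size_map -cardE.
  by move: Hs; rewrite (cardsD1 j) jS.
have := key_poly Hc p sp; rewrite (bigD1 j) //= big1 ?addr0.
  apply/eqP; rewrite !mulf_neq0 ?Hu //.
  have := root_prod_XsubC s (alpha j); rewrite /root => ->.
  apply/mapP => -[b]; rewrite mem_enum !inE => /andP[bj _] /Halpha eb.
  by rewrite eb eqxx in bj.
move=> b bj; have [bS|] := boolP (b \in supp c).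
  suff -> : p.[alpha b] = 0 by rewrite mulr0.
  apply/eqP; have := root_prod_XsubC s (alpha b); rewrite /root => ->.
  by apply: map_f; rewrite mem_enum in_setD1 bj bS.
by rewrite inE negbK => /eqP ->; rewrite mulr0 mul0r.
Qed.

Lemma notsupp (e : 'cV[F]_n) k : k \notin supp e -> e k ord0 = 0.
Proof. by rewrite inE negbK => /eqP. Qed.

Lemma pair_struct (e e' : 'cV[F]_n) : hwt e = 4%N -> e' != e -> (hwt e' <= 4)%N ->
  grsH alpha u *m e' = grsH alpha u *m e ->
  [disjoint supp e & supp e'] /\ #|supp e'| = 4%N.
Proof.
move=> he ne he' HH.
have Hc : grsH alpha u *m (e - e') = 0 by rewrite mulmxBr HH subrr.
have cn : e - e' != 0 by rewrite subr_eq0 eq_sym.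
have sub : supp (e - e') \subset supp e :|: supp e'.
  apply/subsetP => k; rewrite !inE !mxE; apply: contraR.
  by rewrite negb_or !negbK => /andP[/eqP -> /eqP ->]; rewrite subrr.
have big8 : (8 <= #|supp (e - e')|)%N.
  rewrite ltnNge; apply: contra cn => h; apply/eqP; exact: dist7 Hc h.
have := subset_leq_card sub; have := cardsUI (supp e) (supp e').
rewrite /hwt in he he'; rewrite -/(supp e) -/(supp e') in he he'.
move=> U1 U2.
move: U1 U2 he he' big8; set A := #|supp e :|: _|; set B := #|supp e :&: _|; set C := #|supp e|; set D := #|supp e'|; set G := #|supp (e - e')|. move=> U1 U2 he he' big8. have I0 : B = 0%N by lia.
split; last by lia.
by rewrite -setI_eq0 -cards_eq0; apply/eqP; exact: I0.
Qed.

Lemma inj_ST (e1 e2 e1' e2' : 'cV[F]_n) (S T : {set 'I_n}) i0 :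
  supp e1 = S -> supp e2 = S -> supp e1' = T -> supp e2' = T ->
  [disjoint S & T] -> #|S :|: T| = 8%N ->
  grsH alpha u *m e1' = grsH alpha u *m e1 ->
  grsH alpha u *m e2' = grsH alpha u *m e2 ->
  i0 \in S -> e1 i0 ord0 = e2 i0 ord0 -> e1 = e2.
Proof.
move=> s1 s2 s1' s2' dST cU H1 H2 iS eq0.
pose d := (e2 - e2') - (e1 - e1').
have Hd : grsH alpha u *m d = 0 by rewrite /d !mulmxBr H1 H2 !subrr ?subr0.
have iT : i0 \notin T by rewrite (disjointFr dST iS).
have sd : supp d \subset (S :|: T) :\ i0.
  apply/subsetP => k; rewrite !inE /d !mxE => dk; apply/andP; split.
    apply: contraNneq dk => ->.
    by rewrite (@notsupp e1' i0) ?(@notsupp e2' i0) ?s1' ?s2' // eq0 !subr0 subrr.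
  apply: contraR dk; rewrite negb_or => /andP[kS kT].
  by rewrite (@notsupp e1 k) ?(@notsupp e2 k) ?(@notsupp e1' k) ?(@notsupp e2' k) ?s1 ?s2 ?s1' ?s2' // !subr0 ?negbK ?eqxx.
have h := subset_leq_card sd; have := cardsD1 i0 (S :|: T); rewrite in_setU iS cU => /= h2.
have h7 : (#|supp d| <= 7)%N.
  move: h h2; set X := #|supp d|; set Y := #|_ :\ i0|. simpl. move=> h h2; lia.
have d0 : d = 0 := dist7 Hd h7.
apply/matrixP => k l; rewrite (ord1 l).
have := congr1 (fun M : 'M[F]_(n,1) => M k ord0) d0; rewrite /d !mxE.
have [kS|kS] := boolP (k \in S).
  have kT : k \notin T by rewrite (disjointFr dST kS).
  rewrite !(@notsupp e1' k) ?(@notsupp e2' k) ?s1' ?s2' // !subr0 => /eqP.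
  by rewrite subr_eq0 => /eqP.
by rewrite !(@notsupp e1 k) ?(@notsupp e2 k) ?s1 ?s2.
Qed.
End Aux.
Arguments supp {F n} e.
Arguments notsupp {F n} e k _.

Lemma card_bigcup_le (I T : finType) (P : pred I) (A : I -> {set T}) :
  (#|\bigcup_(i | P i) A i| <= \sum_(i | P i) #|A i|)%N.
Proof.
apply: (big_ind2 (fun (X : {set T}) k => #|X| <= k)%N) => //.
  by rewrite cards0.
move=> X k Y m hX hY; apply: leq_trans (leq_card_setU X Y).1 _.
exact: leq_add.
Qed.

Lemma card_main (F : finFieldType) (n : nat)
    (alpha u : 'I_n -> F)
    (Hn8 : (8 <= n)%N) (Hnq : (n <= #|F|)%N)
    (Halpha : injective alpha) (Hu : forall i, u i != 0) :
  let q := #|F| in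
  let H := grsH alpha u in
  (#|[set e : 'cV[F]_n | (hwt e == 4%N) &&
       [exists e' : 'cV[F]_n, [&& e' != e, (hwt e' <= 4)%N & H *m e' == H *m e]]]|
   <= 'C(n, 4) * ('C(n - 4, 4) * (q - 1)))%N.
Proof.
cbv zeta. set q := #|F|. set H := grsH alpha u.
set E := [set e : 'cV[F]_n | _].
pose ES (S T : {set 'I_n}) := [set e in E | (supp e == S) &&
   [exists e' : 'cV[F]_n, [&& e' != e, (hwt e' <= 4)%N, H *m e' == H *m e & supp e' == T]]].
pose P4 := [set S : {set 'I_n} | #|S| == 4%N].
pose Q (S : {set 'I_n}) := [set T : {set 'I_n} | (T \subset ~: S) && (#|T| == 4%N)].
have ESb : forall S T, (#|ES S T| <= q - 1)%N.
  move=> S T; have [->|] := eqVneq (ES S T) set0; first by rewrite cards0.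
  case/set0Pn => e0 e0E.
  have unpack : forall e, e \in ES S T -> [/\ hwt e = 4%N, supp e = S &
      exists e', [/\ e' != e, (hwt e' <= 4)%N, H *m e' = H *m e & supp e' = T]].
    move=> e; rewrite /ES !inE => /andP[/andP[/eqP he _] /andP[/eqP sS /existsP[e' /and4P[ne hw /eqP HH /eqP sT]]]].
    by split=> //; exists e'.
  have facts : forall e, e \in ES S T -> [disjoint S & T] /\ #|S :|: T| = 8%N.
    move=> e /unpack[he sS [e' [ne hw HH sT]]].
    have [dj c4] := pair_struct Halpha Hu he ne hw HH.
    rewrite -sS -sT; split => //.
    have := cardsUI (supp e) (supp e'); rewrite -setI_eq0 in dj.
    rewrite (eqP dj) cards0 addn0 c4 => ->; move: he; rewrite /hwt => ->. by [].
  have [he0 sS0 _] := unpack e0 e0E.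
  have : (0 < #|S|)%N by rewrite -sS0; move: he0; rewrite /hwt => ->.
  case/card_gt0P => i0 i0S.
  have inj : {in ES S T &, injective (fun e : 'cV[F]_n => e i0 ord0)}.
    move=> e1 e2 E1 E2 /= eq12.
    have [_ s1 [e1' [_ _ H1 s1']]] := unpack e1 E1.
    have [_ s2 [e2' [_ _ H2 s2']]] := unpack e2 E2.
    have [dj c8] := facts e1 E1.
    exact: (inj_ST Halpha Hu s1 s2 s1' s2' dj c8 H1 H2 i0S eq12).
  rewrite -(card_in_imset inj).
  apply: leq_trans (subset_leq_card (_ : _ \subset [set~ (0 : F)])) _.
    apply/subsetP => x /imsetP[e eE ->]; rewrite !inE.
    have [_ sS _] := unpack e eE.
    by move: i0S; rewrite -sS inE.
  by rewrite cardsC1 subn1.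
have Esub : E \subset \bigcup_(S in P4) \bigcup_(T in Q S) ES S T.
  apply/subsetP => e eE.
  have eE' := eE; rewrite inE in eE'.
  case/andP: eE' => /eqP he /existsP[e' /and3P[ne hw /eqP HH]].
  have [dj c4] := pair_struct Halpha Hu he ne hw HH.
  apply/bigcupP; exists (supp e).
    by rewrite inE; move: he; rewrite /hwt => ->.
  apply/bigcupP; exists (supp e').
    by rewrite inE c4 eqxx andbT -disjoints_subset disjoint_sym.
  rewrite /ES inE eE eqxx /=; apply/existsP; exists e'.
  by rewrite ne hw HH !eqxx.
  apply: leq_trans (subset_leq_card Esub) _.
  apply: leq_trans (card_bigcup_le _ _ _ _) _.
  apply: leq_trans (_ : (\sum_(S in P4) 'C(n - 4, 4) * (q - 1) <= _)%N).
    apply: leq_sum => S SP.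
    apply: leq_trans (card_bigcup_le _ _ _ _) _.
    apply: leq_trans (_ : (\sum_(T in Q S) (q - 1) <= _)%N).
      by apply: leq_sum => T _; exact: ESb.
    rewrite sum_nat_const /Q cards_draws cardsCs card_ord setCK.
    by move: SP; rewrite inE => /eqP ->.
  by rewrite sum_nat_const /P4 card_draws card_ord.
Qed.

Theorem mainTheorem13 (F : finFieldType) (n : nat)
    (alpha u : 'I_n -> F)
    (Hn8 : (8 <= n)%N) (Hnq : (n <= #|F|)%N)
    (Halpha : injective alpha) (Hu : forall i, u i != 0) :
  let q := #|F| in
  let H := grsH alpha u in
  (#|[set e : 'cV[F]_n | (hwt e == 4%N) &&
       [exists e' : 'cV[F]_n, [&& e' != e, (hwt e' <= 4)%N & H *m e' == H *m e]]]|%:R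
     : rat)
  <= ((n - 4) * (n - 5) * (n - 6) * (n - 7))%:R / (24 * (q - 1) ^ 3)%:R
       * ((q - 1) ^ 4 * 'C(n, 4))%:R.
Proof.
have cardE := @card_main F n alpha u Hn8 Hnq Halpha Hu.
cbv zeta in cardE |- *. set q := #|F| in cardE |- *.
have h24 : ((n - 4) * (n - 5) * (n - 6) * (n - 7) = 'C(n - 4, 4) * 24)%N.
  have := bin_ffact (n - 4) 4.
  have -> : (n - 4 = (n - 8).+4)%N by lia.
  rewrite !ffactnS ffactn0 /= => ->.
  have -> : (n - 5 = (n - 8).+3)%N by lia.
  have -> : (n - 6 = (n - 8).+2)%N by lia.
  have -> : (n - 7 = (n - 8).+1)%N by lia.
  have -> : ((n - 8).+4 = n - 4)%N by lia.
  by rewrite !mulnA muln1.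
have q1 : ((q - 1)%:R : rat) != 0 by rewrite pnatr_eq0 -lt0n subn_gt0; lia.
rewrite h24.
have -> : (('C(n - 4, 4) * 24)%:R / (24 * (q - 1) ^ 3)%:R * ((q - 1) ^ 4 * 'C(n, 4))%:R : rat)
   = ('C(n, 4) * ('C(n - 4, 4) * (q - 1)))%:R.
  by rewrite !natrM ?natrX; field; rewrite ?q1.
by rewrite ler_nat.
Qed.
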